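(* Let $n\in\omega$ and for each $u\in2^n$ let $X_u\subseteq\mathcal D$ be a nonempty $\mathrm{OD}$ set. Assume that for every neighbouring pair $u,v\in2^n$ an $\mathrm{OD}$ set $R_{uv}\subseteq\mathcal D^2$ is given such that $X_u\,R_{uv}\,X_v$. (1) If $u_0\in2^n$ and $X'\subseteq X_{u_0}$ is a nonempty $\mathrm{OD}$ set, then there is a system of nonempty $\mathrm{OD}$ sets $Y_u\subseteq X_u$ ($u\in2^n$) such that $Y_u\,R_{uv}\,Y_v$ for all neighbouring pairs $u,v$, and $Y_{u_0}=X'$. (2) If $u_0,v_0\in2^n$ is a neighbouring pair and nonempty $\mathrm{OD}$ sets $X'\subseteq X_{u_0}$, $X''\subseteq X_{v_0}$ satisfy $X'\,R_{u_0v_0}\,X''$, then there is a system of nonempty $\mathrm{OD}$ sets $Y_u\subseteq X_u$ ($u\in2^n$) such that $Y_u\,R_{uv}\,Y_v$ for all neighbouring pairs $u,v$, and $Y_{u_0}=X'$, $Y_{v_0}=X''$.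
   Context: $\mathcal D=2^\omega$. For $u,v\in2^n$, the ordered pair $\langle u,v\rangle$ is a neighbouring pair iff $u=0^k{}^\frown0^\frown r$ and $v=0^k{}^\frown1^\frown r$ for some $k<n$ and some $r\in2^{n-k-1}$, where $0^k$ is the sequence of $k$ zeros. For sets $X,Y$ and a binary relation $R$, $X\,R\,Y$ means: $\forall x\in X\,\exists y\in Y\,(x\,R\,y)$ and $\forall y\in Y\,\exists x\in X\,(x\,R\,y)$. *)

(* Defs.v *)
From mathcomp Require Import all_boot.
Set Implicit Arguments. Unset Strict Implicit. Unset Printing Implicit Defensive.

(* The Cantor space D = 2^omega. Subsets of D are predicates D -> Prop,
   subsets of D^2 are binary predicates D -> D -> Prop. *)
Definition D := nat -> bool.

Definition zeros (k : nat) : seq bool := nseq k false.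

(* <u,v> is a neighbouring pair of elements of 2^n:
   u = 0^k ^ 0 ^ r  and  v = 0^k ^ 1 ^ r  (k < n forced by lengths). *)
Definition neighbour (n : nat) (u v : n.-tuple bool) : Prop :=
  exists (k : nat) (r : seq bool),
    val u = zeros k ++ false :: r /\ val v = zeros k ++ true :: r.

Definition nonempty (A : D -> Prop) : Prop := exists x, A x.
Definition includedD (A B : D -> Prop) : Prop := forall x, A x -> B x.

Definition relcover (X : D -> Prop) (R : D -> D -> Prop) (Y : D -> Prop) : Prop :=
  (forall x, X x -> exists y, Y y /\ R x y) /\
  (forall y, Y y -> exists x, X x /\ R x y).

(* Abstraction of ordinal definability:
   ODs / ODr are the classes of OD subsets of D and of D^2.  We only assume
   closure properties that the genuine class OD satisfies: closure under
   binary intersection and under taking images / preimages of an OD set by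
   an OD relation. *)
Definition od_closed (ODs : (D -> Prop) -> Prop) (ODr : (D -> D -> Prop) -> Prop)
  : Prop :=
  (forall A B, ODs A -> ODs B -> ODs (fun x => A x /\ B x)) /\
  (forall A R, ODs A -> ODr R -> ODs (fun y => exists x, A x /\ R x y)) /\
  (forall A R, ODs A -> ODr R -> ODs (fun x => exists y, A y /\ R x y)).

(* Main.v *)
Require Import Defs.
From mathcomp Require Import all_boot.
Set Implicit Arguments. Unset Strict Implicit. Unset Printing Implicit Defensive.

Section S.
Variables (ODs : (D -> Prop) -> Prop) (ODr : (D -> D -> Prop) -> Prop).
Hypothesis HOD : od_closed ODs ODr.

Definition img (B A : D -> Prop) (S : D -> D -> Prop) : D -> Prop :=
  fun y => B y /\ exists x, A x /\ S x y.
Definition pre (A B : D -> Prop) (S : D -> D -> Prop) : D -> Prop :=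
  fun x => A x /\ exists y, B y /\ S x y.

Lemma img_ok A B A' S : ODs B -> ODs A' -> ODr S -> relcover A S B ->
  includedD A' A -> nonempty A' ->
  ODs (img B A' S) /\ nonempty (img B A' S) /\ includedD (img B A' S) B
  /\ relcover A' S (img B A' S).
Proof.
move=> OB OA OS [H1 H2] HA' [x0 Hx0]; case: HOD => Hi [Him Hpre].
split; first exact: (Hi _ _ OB (Him _ _ OA OS)).
split.
  have [y [By Sy]] := H1 x0 (HA' x0 Hx0). by exists y; split=> //; exists x0.
split; first by move=> y [].
split.
  move=> x Hx; have [y [By Sy]] := H1 x (HA' x Hx).
  by exists y; split=> //; split=> //; exists x.
by move=> y [_ [x [Hx Sx]]]; exists x.
Qed.

Lemma pre_ok A B B' S : ODs A -> ODs B' -> ODr S -> relcover A S B ->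
  includedD B' B -> nonempty B' ->
  ODs (pre A B' S) /\ nonempty (pre A B' S) /\ includedD (pre A B' S) A
  /\ relcover (pre A B' S) S B'.
Proof.
move=> OA OB OS [H1 H2] HB' [y0 Hy0]; case: HOD => Hi [Him Hpre].
split; first exact: (Hi _ _ OA (Hpre _ _ OB OS)).
split.
  have [x [Ax Sx]] := H2 y0 (HB' y0 Hy0). by exists x; split=> //; exists y0.
split; first by move=> x [].
split.
  by move=> x [_ [y [Hy Sy]]]; exists y.
move=> y Hy; have [x [Ax Sx]] := H2 y (HB' y Hy).
by exists x; split=> //; split=> //; exists y.
Qed.

Lemma neighbour0 (u v : 0.-tuple bool) : ~ neighbour u v.
Proof.
case=> k [r [Hu _]]. have := congr1 size Hu.
by rewrite size_tuple size_cat /= addnS.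
Qed.

Lemma neighbour_cons n b c (r s : n.-tuple bool) :
  neighbour [tuple of b :: r] [tuple of c :: s] ->
  (b = false /\ c = true /\ r = s) \/ (b = false /\ c = false /\ neighbour r s).
Proof.
case=> [[|k] [r' [/= Hu Hv]]].
- case: Hu => -> Hr; case: Hv => -> Hs; left; do 2!split=>//.
  by apply: val_inj; rewrite /= Hr Hs.
- case: Hu => -> Hr; case: Hv => -> Hs; right; do 2!split=>//.
  by exists k, r'.
Qed.

Lemma neighbour_01 n (r : n.-tuple bool) :
  neighbour [tuple of false :: r] [tuple of true :: r].
Proof. by exists 0, r. Qed.

Lemma neighbour_00 n (r s : n.-tuple bool) : neighbour r s ->
  neighbour [tuple of false :: r] [tuple of false :: s].
Proof. by case=> k [r' [Hu Hv]]; exists k.+1, r'; rewrite /= Hu Hv. Qed.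

Definition mkY n (f0 f1 : n.-tuple bool -> D -> Prop) (t : n.+1.-tuple bool)
  : D -> Prop :=
  if thead t then f1 (behead_tuple t) else f0 (behead_tuple t).

Lemma mkY_cons n f0 f1 b (r : n.-tuple bool) :
  mkY f0 f1 [tuple of b :: r] = if b then f1 r else f0 r.
Proof.
rewrite /mkY theadE.
have -> : behead_tuple [tuple of b :: r] = r by apply: val_inj.
done.
Qed.

Definition good n (X : n.-tuple bool -> D -> Prop)
  (R : n.-tuple bool -> n.-tuple bool -> D -> D -> Prop) Y :=
  (forall u, ODs (Y u) /\ nonempty (Y u) /\ includedD (Y u) (X u)) /\
  (forall u v, neighbour u v -> relcover (Y u) (R u v) (Y v)).

Definition X0 n (X : n.+1.-tuple bool -> D -> Prop) (r : n.-tuple bool) := X [tuple of false :: r].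
Definition R0 n (R : n.+1.-tuple bool -> n.+1.-tuple bool -> D -> D -> Prop) (r s : n.-tuple bool) :=
  R [tuple of false :: r] [tuple of false :: s].

Lemma step n X R (Y0 Y1 : n.-tuple bool -> D -> Prop) :
  good (X0 X) (R0 R) Y0 ->
  (forall r, ODs (Y1 r) /\ nonempty (Y1 r) /\ includedD (Y1 r) (X [tuple of true :: r])
     /\ relcover (Y0 r) (R [tuple of false :: r] [tuple of true :: r]) (Y1 r)) ->
  good X R (mkY Y0 Y1).
Proof.
move=> [G1 G2] H1; split.
  move=> u; case/tupleP: u => b r; rewrite mkY_cons; case: b.
    by case: (H1 r) => ? [? [? _]].
  exact: G1.
move=> u v; case/tupleP: u => b r; case/tupleP: v => c s.
move/neighbour_cons => [[-> [-> <-]] | [-> [-> Hn]]]; rewrite !mkY_cons.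
  by case: (H1 r) => _ [_ [_ ?]].
exact: G2.
Qed.

Lemma img_step n X R
  (HX : forall u, ODs (X u) /\ nonempty (X u))
  (HR : forall u v, neighbour u v -> ODr (R u v) /\ relcover (X u) (R u v) (X v))
  (Y0 : n.-tuple bool -> D -> Prop) :
  good (X0 X) (R0 R) Y0 -> forall r : n.-tuple bool,
  let Y1 := img (X [tuple of true :: r]) (Y0 r) (R [tuple of false :: r] [tuple of true :: r]) in
  ODs Y1 /\ nonempty Y1 /\ includedD Y1 (X [tuple of true :: r])
     /\ relcover (Y0 r) (R [tuple of false :: r] [tuple of true :: r]) Y1.
Proof.
move=> [G1 _] r /=.
have [OX _] := HX [tuple of true :: r].
have [OR Hrc] := HR _ _ (neighbour_01 r).
have [OY [NY IY]] := G1 r.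
exact: img_ok OX OY OR Hrc IY NY.
Qed.

Lemma HR0 n X R
  (HR : forall u v : n.+1.-tuple bool, neighbour u v -> ODr (R u v) /\ relcover (X u) (R u v) (X v)) :
  forall r s, neighbour r s -> ODr (R0 R r s) /\ relcover (X0 X r) (R0 R r s) (X0 X s).
Proof. by move=> r s /neighbour_00 /HR. Qed.

Lemma P1 n : forall X R, (forall u, ODs (X u) /\ nonempty (X u)) ->
 (forall u v, neighbour u v -> ODr (R u v) /\ relcover (X u) (R u v) (X v)) ->
 forall (u0 : n.-tuple bool) X', ODs X' -> nonempty X' -> includedD X' (X u0) ->
 exists Y, good X R Y /\ Y u0 = X'.
Proof.
elim: n => [|n IH] X R HX HR u0 X' O' N' I'.
  exists (fun _ => X'); split=> //; split.
    move=> u; have -> : u = u0 by rewrite (tuple0 u) (tuple0 u0).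
    done.
  by move=> u v /neighbour0.
have HX0 : forall r, ODs (X0 X r) /\ nonempty (X0 X r) by move=> r; exact: HX.
have HR0' := HR0 HR.
case/tupleP: u0 I' => b r0 I'.
case: b I' => I'.
- have [OX _] := HX [tuple of false :: r0].
  have [OR Hrc] := HR _ _ (neighbour_01 r0).
  have [OZ [NZ [IZ RZ]]] := pre_ok OX O' OR Hrc I' N'.
  have [Y0 [G0 E0]] := IH _ _ HX0 HR0' r0 _ OZ NZ IZ.
  exists (mkY Y0 (fun r => if r == r0 then X' else
    img (X [tuple of true :: r]) (Y0 r) (R [tuple of false :: r] [tuple of true :: r]))).
  split; last by rewrite mkY_cons eqxx.
  apply: step => // r; case: eqP => [->|_]; first by rewrite E0.
  exact: (img_step HX HR G0).
- have [Y0 [G0 E0]] := IH _ _ HX0 HR0' r0 _ O' N' I'.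
  exists (mkY Y0 (fun r =>
    img (X [tuple of true :: r]) (Y0 r) (R [tuple of false :: r] [tuple of true :: r]))).
  split; last by rewrite mkY_cons.
  apply: step => // r.
  exact: (img_step HX HR G0).
Qed.

Lemma P2 n : forall X R, (forall u, ODs (X u) /\ nonempty (X u)) ->
 (forall u v, neighbour u v -> ODr (R u v) /\ relcover (X u) (R u v) (X v)) ->
 forall (u0 v0 : n.-tuple bool) (X' X'' : D -> Prop),
      neighbour u0 v0 ->
      ODs X' -> nonempty X' -> includedD X' (X u0) ->
      ODs X'' -> nonempty X'' -> includedD X'' (X v0) ->
      relcover X' (R u0 v0) X'' ->
 exists Y, good X R Y /\ Y u0 = X' /\ Y v0 = X''.
Proof.
elim: n => [|n IH] X R HX HR u0 v0 X' X'' Hn O' N' I' O'' N'' I'' Hc.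
  by case: (neighbour0 Hn).
have HX0 : forall r, ODs (X0 X r) /\ nonempty (X0 X r) by move=> r; exact: HX.
have HR0' := HR0 HR.
move: Hn I' I'' Hc; case/tupleP: u0 => b r; case/tupleP: v0 => c s.
move=> Hn; case/neighbour_cons: (Hn) => [[-> [-> <-]] | [-> [-> Hrs]]] I' I'' Hc.
- have [Y0 [G0 E0]] := P1 HX0 HR0' O' N' I'.
  exists (mkY Y0 (fun t => if t == r then X'' else
    img (X [tuple of true :: t]) (Y0 t) (R [tuple of false :: t] [tuple of true :: t]))).
  split; last by rewrite !mkY_cons eqxx.
  apply: step => // t; case: eqP => [->|_]; first by rewrite E0.
  exact: (img_step HX HR G0).
- have [Y0 [G0 [E0 E1]]] := IH _ _ HX0 HR0' r s X' X'' Hrs O' N' I' O'' N'' I'' Hc.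
  exists (mkY Y0 (fun t =>
    img (X [tuple of true :: t]) (Y0 t) (R [tuple of false :: t] [tuple of true :: t]))).
  split; last by rewrite !mkY_cons.
  apply: step => // t.
  exact: (img_step HX HR G0).
Qed.

End S.

Theorem lemma4p3
  (ODs : (D -> Prop) -> Prop) (ODr : (D -> D -> Prop) -> Prop)
  (HOD : od_closed ODs ODr)
  (n : nat) (X : n.-tuple bool -> D -> Prop)
  (R : n.-tuple bool -> n.-tuple bool -> D -> D -> Prop)
  (HX : forall u, ODs (X u) /\ nonempty (X u))
  (HR : forall u v, neighbour u v -> ODr (R u v) /\ relcover (X u) (R u v) (X v)) :
  (forall (u0 : n.-tuple bool) (X' : D -> Prop),
      ODs X' -> nonempty X' -> includedD X' (X u0) ->
      exists Y : n.-tuple bool -> D -> Prop,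
        (forall u, ODs (Y u) /\ nonempty (Y u) /\ includedD (Y u) (X u)) /\
        (forall u v, neighbour u v -> relcover (Y u) (R u v) (Y v)) /\
        Y u0 = X') /\
  (forall (u0 v0 : n.-tuple bool) (X' X'' : D -> Prop),
      neighbour u0 v0 ->
      ODs X' -> nonempty X' -> includedD X' (X u0) ->
      ODs X'' -> nonempty X'' -> includedD X'' (X v0) ->
      relcover X' (R u0 v0) X'' ->
      exists Y : n.-tuple bool -> D -> Prop,
        (forall u, ODs (Y u) /\ nonempty (Y u) /\ includedD (Y u) (X u)) /\
        (forall u v, neighbour u v -> relcover (Y u) (R u v) (Y v)) /\
        Y u0 = X' /\ Y v0 = X'').
Proof.
split.
  move=> u0 X' O' N' I'.
  have [Y [[G1 G2] E]] := P1 HOD HX HR O' N' I'.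
  by exists Y.
move=> u0 v0 X' X'' Hn O' N' I' O'' N'' I'' Hc.
have [Y [[G1 G2] E]] := P2 HOD HX HR Hn O' N' I' O'' N'' I'' Hc.
by exists Y.
Qed.
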